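(* Let $G$ be a compact simple Lie group of rank $n$ with simple roots $\alpha_1,\dots,\alpha_n\in\mathbb{R}^n$, coroots $\alpha_i^\vee=2\alpha_i/\langle\alpha_i,\alpha_i\rangle$, Weyl group $W$, root lattice $Q=\sum\mathbb{Z}\alpha_i$, weight lattice $P=\{\omega:\langle\omega,\alpha_i^\vee\rangle\in\mathbb{Z}\ \forall i\}$ with fundamental weights $\omega_i$ ($\langle\omega_i,\alpha_j^\vee\rangle=\delta_{ij}$), highest dual root $\eta=m_1^\vee\alpha_1^\vee+\dots+m_n^\vee\alpha_n^\vee$ (the highest root of the root system $\{\alpha^\vee\}$), and $F^\vee=\{a:\langle a,\alpha_i^\vee\rangle\ge0\ \forall i,\ \langle a,\eta\rangle\le1\}$. Fix $M\in\mathbb{N}$, let $W$ act naturally on $\mathbb{R}^n/MQ$, and let $\Lambda_M=MF^\vee\cap P/MQ$ be the set of cosets in $P/MQ$ having a representative in $MF^\vee$. Then: (1) for every $\lambda\in P/MQ$ there exist $\lambda'\in\Lambda_M$ and $w\in W$ with $\lambda=w\lambda'$; (2) if $\lambda,\lambda'\in\Lambda_M$ and $\lambda'=w\lambda$ with $w\in W$, then $\lambda'=\lambda=w\lambda$; (3) if $\lambda=b+MQ$ with $b\in MF^\vee$, then $\mathrm{Stab}^\vee(\lambda)=\{w\in W:w\lambda=\lambda\}$ is isomorphic to $\mathrm{Stab}_{\widehat W^{\mathrm{aff}}}(b/M)=\{w^{\mathrm{aff}}\in\widehat W^{\mathrm{aff}}:w^{\mathrm{aff}}(b/M)=b/M\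}$.
   Context: The dual affine Weyl group $\widehat W^{\mathrm{aff}}=Q\rtimes W$ is the group of affine maps of $\mathbb{R}^n$ generated by $W$ and translations by elements of $Q$; $F^\vee$ is a fundamental region for it. $\Lambda_M$ is represented by the points $t_1\omega_1+\dots+t_n\omega_n$ with $t_i\in\mathbb{Z}^{\ge0}$ and $t_0+\sum t_im_i^\vee=M$. *)

(* Defs.v *)
From HB Require Import structures.
From mathcomp Require Import all_boot all_order all_algebra.
From mathcomp Require Import reals.
Set Implicit Arguments. Unset Strict Implicit. Unset Printing Implicit Defensive.
Import Order.TTheory GRing.Theory Num.Theory.
Local Open Scope ring_scope.

Section RootData.
Variables (R : realType) (n : nat).
Notation vec := 'cV[R]_n.
Notation mat := 'M[R]_n.

Definition dot (u v : vec) : R := (u^T *m v) 0 0.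

Definition coroot (a : vec) : vec := (2 / dot a a) *: a.

Definition reflmx (a : vec) : mat := 1%:M - a *m (coroot a)^T.

(* Phi is a reduced, crystallographic, irreducible root system
   (spanning R^n follows from the existence of a base of n roots) *)
Definition is_irred_root_system (Phi : seq vec) : Prop :=
  [/\ Phi != [::] /\ 0 \notin Phi,
      (forall a b, a \in Phi -> b \in Phi -> reflmx a *m b \in Phi),
      (forall a b, a \in Phi -> b \in Phi -> dot b (coroot a) \is a Num.int),
      (forall a (c : R), a \in Phi -> c *: a \in Phi -> c = 1 \/ c = -1) &
      (forall S : pred vec,
         (forall a b, a \in Phi -> b \in Phi -> S a -> ~~ S b -> dot a b = 0) ->
         (forall a, a \in Phi -> S a) \/ (forall a, a \in Phi -> ~~ S a))].

Definition is_base (Phi : seq vec) (alpha : 'I_n -> vec) : Prop :=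
  [/\ (forall i, alpha i \in Phi),
      (forall c : 'I_n -> R, \sum_i c i *: alpha i = 0 -> forall i, c i = 0) &
      (forall b, b \in Phi -> exists k : 'I_n -> int,
          b = \sum_i (k i)%:~R *: alpha i /\
          ((forall i, 0 <= k i) \/ (forall i, k i <= 0)))].

(* eta is the highest root of the dual root system {a^v : a in Phi}
   (with respect to the base of simple coroots alpha_i^v) *)
Definition is_highest_dual_root (Phi : seq vec) (alpha : 'I_n -> vec) (eta : vec)
  : Prop :=
  (exists2 a, a \in Phi & eta = coroot a) /\
  (forall a, a \in Phi -> exists k : 'I_n -> nat,
      eta - coroot a = \sum_i (k i)%:R *: coroot (alpha i)).

Inductive inW (Phi : seq vec) : mat -> Prop :=
| inW1 : inW Phi 1%:M
| inWS a w : a \in Phi -> inW Phi w -> inW Phi (reflmx a *m w).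

Definition inQ (alpha : 'I_n -> vec) (x : vec) : Prop :=
  exists k : 'I_n -> int, x = \sum_i (k i)%:~R *: alpha i.

Definition inP (alpha : 'I_n -> vec) (x : vec) : Prop :=
  forall i, dot x (coroot (alpha i)) \is a Num.int.

Definition inFv (alpha : 'I_n -> vec) (eta : vec) (a : vec) : Prop :=
  (forall i, 0 <= dot a (coroot (alpha i))) /\ dot a eta <= 1.

Definition inMFv (alpha : 'I_n -> vec) (eta : vec) (M : nat) (x : vec) : Prop :=
  exists2 a, inFv alpha eta a & x = M%:R *: a.

Definition congMQ (alpha : 'I_n -> vec) (M : nat) (x y : vec) : Prop :=
  exists2 q, inQ alpha q & x - y = M%:R *: q.

Definition inLambda (alpha : 'I_n -> vec) (eta : vec) (M : nat) (b : vec) : Prop :=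
  inP alpha b /\ exists2 c, inMFv alpha eta M c & congMQ alpha M b c.

Definition inStabv (Phi : seq vec) (alpha : 'I_n -> vec) (M : nat) (b : vec)
  (w : mat) : Prop :=
  inW Phi w /\ congMQ alpha M (w *m b) b.

(* elements of the dual affine Weyl group Q x| W: pairs (w, q) acting by
   x |-> w x + q; group law = composition of affine maps *)
Definition aff_act (g : mat * vec) (x : vec) : vec := g.1 *m x + g.2.
Definition aff_mul (g h : mat * vec) : mat * vec := (g.1 *m h.1, g.1 *m h.2 + g.2).

Definition inAffStab (Phi : seq vec) (alpha : 'I_n -> vec) (x : vec)
  (g : mat * vec) : Prop :=
  [/\ inW Phi g.1, inQ alpha g.2 & aff_act g x = x].

End RootData.

(* Main.v *)
Require Import Defs.
From HB Require Import structures.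
From mathcomp Require Import all_boot all_order all_algebra.
From mathcomp Require Import reals.
From mathcomp Require Import ring lra zify.
Import Order.TTheory GRing.Theory Num.Theory.
Local Open Scope ring_scope.
Set Implicit Arguments. Unset Strict Implicit. Unset Printing Implicit Defensive.


Lemma sum_opt (R : nmodType) n (F : option 'I_n -> R) :
  \sum_j F j = F None + \sum_i F (Some i).
Proof.
rewrite (bigD1 None) //=; congr (_ + _).
rewrite (reindex_omap Some id) /=; last by case.
by apply: eq_bigl => i; rewrite eqxx.
Qed.

Section Gen.
Variables (R : realType) (n : nat).
Notation vec := 'cV[R]_n.
Notation mat := 'M[R]_n.
Implicit Types (u v w x y a b : vec) (A B : mat) (g k : mat * vec).

Lemma dotE u v : dot u v = \sum_k u k 0 * v k 0.
Proof. by rewrite /dot mxE; apply: eq_bigr => k _; rewrite mxE. Qed.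
Lemma dotC u v : dot u v = dot v u.
Proof. by rewrite !dotE; apply: eq_bigr => k _; rewrite mulrC. Qed.
Lemma dotDr u v w : dot u (v + w) = dot u v + dot u w.
Proof. by rewrite !dotE -big_split; apply: eq_bigr => k _; rewrite mxE mulrDr. Qed.
Lemma dotDl u v w : dot (u + v) w = dot u w + dot v w.
Proof. by rewrite dotC dotDr !(dotC w). Qed.
Lemma dotZr c u v : dot u (c *: v) = c * dot u v.
Proof. by rewrite !dotE mulr_sumr; apply: eq_bigr => k _; rewrite mxE mulrCA. Qed.
Lemma dotZl c u v : dot (c *: u) v = c * dot u v.
Proof. by rewrite dotC dotZr dotC. Qed.
Lemma dot0r u : dot u 0 = 0.
Proof. by rewrite -(scale0r 0) dotZr mul0r. Qed.
Lemma dot0l u : dot 0 u = 0.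
Proof. by rewrite dotC dot0r. Qed.
Lemma dotNr u v : dot u (- v) = - dot u v.
Proof. by rewrite -scaleN1r dotZr mulN1r. Qed.
Lemma dotNl u v : dot (- u) v = - dot u v.
Proof. by rewrite dotC dotNr dotC. Qed.
Lemma dotBr u v w : dot u (v - w) = dot u v - dot u w.
Proof. by rewrite dotDr dotNr. Qed.
Lemma dotBl u v w : dot (u - v) w = dot u w - dot v w.
Proof. by rewrite dotDl dotNl. Qed.
Lemma dot_sumr (I : finType) (F : I -> vec) u :
  dot u (\sum_i F i) = \sum_i dot u (F i).
Proof. exact: (big_morph (dot u) (dotDr u) (dot0r u)). Qed.
Lemma dot_suml (I : finType) (F : I -> vec) u :
  dot (\sum_i F i) u = \sum_i dot (F i) u.
Proof. rewrite dotC dot_sumr; apply: eq_bigr => i _; exact: dotC. Qed.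

Lemma dot_ge0 u : 0 <= dot u u.
Proof. by rewrite dotE; apply: sumr_ge0 => k _; rewrite -expr2 sqr_ge0. Qed.
Lemma dot_eq0 u : dot u u = 0 -> u = 0.
Proof.
rewrite dotE => /eqP; rewrite psumr_eq0 => [/allP H|k _]; last by rewrite -expr2 sqr_ge0.
apply/matrixP => k j; rewrite ord1 mxE.
have := H k (mem_index_enum k); rewrite /= -expr2 sqrf_eq0 => /eqP //.
Qed.
Lemma dot_neq0 u : u != 0 -> dot u u != 0.
Proof. by move=> H; apply/eqP => /dot_eq0 /eqP; rewrite (negbTE H). Qed.
Lemma dot_gt0 u : u != 0 -> 0 < dot u u.
Proof. by move=> H; rewrite lt_def dot_neq0 // dot_ge0. Qed.

Lemma refl_act a x : reflmx a *m x = x - dot x (coroot a) *: a.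
Proof.
rewrite /reflmx mulmxBl mul1mx -mulmxA [(coroot a)^T *m x]mx11_scalar.
by rewrite mul_mx_scalar -/(dot (coroot a) x) dotC.
Qed.

Lemma coroot_dot a : a != 0 -> dot a (coroot a) = 2.
Proof. move=> /dot_neq0 H; rewrite /coroot dotZr; field. exact: H. Qed.

Lemma corootK a : coroot (coroot a) = a.
Proof.
have [->|Ha] := eqVneq a 0; first by rewrite /coroot !scaler0.
have H := dot_neq0 Ha.
rewrite /coroot dotZl dotZr scalerA; rewrite -[RHS]scale1r; congr (_ *: _).
by field.
Qed.

Lemma coroot0 : coroot (0 : vec) = 0.
Proof. by rewrite /coroot scaler0. Qed.
Lemma corootN a : coroot (- a) = - coroot a.
Proof. by rewrite /coroot dotNl dotNr opprK scalerN. Qed.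
Lemma coroot_eq0 a : (coroot a == 0) = (a == 0).
Proof.
apply/eqP/eqP => [H|->]; last exact: coroot0.
by rewrite -(corootK a) H coroot0.
Qed.
Lemma corootZ c a : c != 0 -> coroot (c *: a) = c^-1 *: coroot a.
Proof.
move=> Hc; have [->|Ha] := eqVneq a 0; first by rewrite scaler0 coroot0 scaler0.
have H := dot_neq0 Ha.
rewrite /coroot dotZl dotZr !scalerA; congr (_ *: _); by field; apply/andP.
Qed.
Lemma reflmxN a : reflmx (- a) = reflmx a.
Proof. by rewrite /reflmx corootN linearN /= mulNmx mulmxN opprK. Qed.

Definition dp (w : mat) := forall u v, dot (w *m u) (w *m v) = dot u v.

Lemma dp1 : dp 1%:M.
Proof. by move=> u v; rewrite !mul1mx. Qed.
Lemma dpM A B : dp A -> dp B -> dp (A *m B).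
Proof. by move=> HA HB u v; rewrite -!mulmxA HA HB. Qed.

Lemma dp_refl a : dp (reflmx a).
Proof.
move=> u v; have [->|Ha] := eqVneq a 0.
  by rewrite !refl_act coroot0 !dot0r !scale0r !subr0.
have H := dot_neq0 Ha.
rewrite !refl_act !dotBl !dotBr !dotZl ?dotZr /coroot ?dotZr (dotC a v).
by field.
Qed.

Lemma refl_invol a x : reflmx a *m (reflmx a *m x) = x.
Proof.
have [->|Ha] := eqVneq a 0.
  by rewrite !refl_act coroot0 !dot0r !scale0r !subr0.
rewrite refl_act [reflmx a *m x]refl_act dotBl dotZl coroot_dot //.
set d := dot x (coroot a).
have -> : d - d * 2 = - d by ring.
by rewrite scaleNr opprK subrK.
Qed.

Lemma dp_coroot (w : mat) a : dp w -> w *m coroot a = coroot (w *m a).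
Proof. by move=> H; rewrite /coroot H scalemxAr. Qed.

Lemma mx_ext A B : (forall x : vec, A *m x = B *m x) -> A = B.
Proof.
move=> H; apply/matrixP => i j.
have := H (delta_mx j 0); rewrite -!colE => /(congr1 (fun v : vec => v i 0)).
by rewrite !mxE.
Qed.

Definition aff1 : mat * vec := (1%:M, 0).
Lemma aff_actM g (h : mat * vec) x : aff_act (aff_mul g h) x = aff_act g (aff_act h x).
Proof. by rewrite /aff_act /aff_mul /= mulmxDr mulmxA addrA. Qed.
Lemma aff_act1 x : aff_act aff1 x = x.
Proof. by rewrite /aff_act /= mul1mx addr0. Qed.
Lemma aff_ext (g h : mat * vec) : (forall x, aff_act g x = aff_act h x) -> g = h.
Proof.
case: g => A u; case: h => B v /= H.
have Huv : u = v by have := H 0; rewrite /aff_act /= !mulmx0 !add0r.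
subst v; congr pair; apply: mx_ext => x.
by have := H x; rewrite /aff_act /= => /addIr.
Qed.
Lemma aff_mulA g (h : mat * vec) k : aff_mul (aff_mul g h) k = aff_mul g (aff_mul h k).
Proof. by apply: aff_ext => x; rewrite !aff_actM. Qed.
Lemma aff_mul1g g : aff_mul aff1 g = g.
Proof. by apply: aff_ext => x; rewrite !aff_actM aff_act1. Qed.
Lemma aff_mulg1 g : aff_mul g aff1 = g.
Proof. by apply: aff_ext => x; rewrite !aff_actM aff_act1. Qed.
Lemma aff_actB g x c v : aff_act g (x - c *: v) = aff_act g x - c *: (g.1 *m v).
Proof. by rewrite /aff_act mulmxBr -scalemxAr addrAC. Qed.

Definition ev (f : vec * R) x := dot x f.1 + f.2.
Definition act (g : mat * vec) (f : vec * R) : vec * R :=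
  (g.1 *m f.1, f.2 - dot g.2 (g.1 *m f.1)).
Definition refl (f : vec * R) : mat * vec :=
  (reflmx (coroot f.1), - f.2 *: coroot f.1).
Definition fneg (f : vec * R) : vec * R := (- f.1, - f.2).

Lemma refl_aff (f : vec * R) x : aff_act (refl f) x = x - ev f x *: coroot f.1.
Proof.
by rewrite /aff_act /refl /= refl_act corootK /ev scalerDl opprD addrA scaleNr.
Qed.

Lemma act_refl (f h : vec * R) : f.1 != 0 ->
  act (refl f) h = (h.1 - dot h.1 (coroot f.1) *: f.1, h.2 - dot h.1 (coroot f.1) * f.2).
Proof.
move=> Hb; have H := dot_neq0 Hb.
have E : reflmx (coroot f.1) *m h.1 = h.1 - dot h.1 (coroot f.1) *: f.1.
  rewrite refl_act corootK; congr (_ - _); rewrite /coroot dotZr scalerA; congr (_ *: _).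
  by rewrite mulrC.
rewrite /act /refl /= E; congr pair; congr (_ - _).
rewrite dotZl dotBr dotZr /coroot !dotZl !dotZr (dotC f.1 h.1); by field.
Qed.

Lemma ev_act g (f : vec * R) x : dp g.1 -> ev (act g f) (aff_act g x) = ev f x.
Proof.
move=> H; rewrite /ev /act /aff_act /= dotDl H; ring.
Qed.

Lemma act_mul g (h : mat * vec) (f : vec * R) : dp g.1 -> act (aff_mul g h) f = act g (act h f).
Proof.
move=> H; rewrite /act /aff_mul /= -!mulmxA; congr pair.
rewrite dotDl H; ring.
Qed.

Lemma act1 (f : vec * R) : act aff1 f = f.
Proof. by case: f => b k; rewrite /act /= mul1mx dot0l subr0. Qed.

Lemma act_fneg g (f : vec * R) : act g (fneg f) = fneg (act g f).
Proof. by rewrite /act /fneg /= mulmxN dotNr opprK opprD opprK. Qed.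

Lemma refl_fneg (f : vec * R) : refl (fneg f) = refl f.
Proof. by rewrite /refl /fneg /= corootN reflmxN opprK scalerN scaleNr. Qed.

Lemma refl_refl (f : vec * R) : aff_mul (refl f) (refl f) = aff1.
Proof.
have [E|Hb] := eqVneq f.1 0.
  by apply: aff_ext => x; rewrite !aff_actM !refl_aff E coroot0 !scaler0 !subr0 aff_act1.
apply: aff_ext => x; rewrite !aff_actM !refl_aff aff_act1.
have -> : ev f (x - ev f x *: coroot f.1) = - ev f x.
  rewrite /ev dotBl dotZl (dotC (coroot _)) coroot_dot //; ring.
by rewrite scaleNr opprK subrK.
Qed.

Lemma refl_conj g (f : vec * R) : dp g.1 ->
  aff_mul g (refl f) = aff_mul (refl (act g f)) g.
Proof.
move=> H; apply: aff_ext => x.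
by rewrite !aff_actM refl_aff aff_actB refl_aff ev_act // /act /= -dp_coroot.
Qed.

End Gen.


Definition ac (R : realType) n (alpha : 'I_n -> 'cV[R]_n) i := coroot (alpha i).
Definition gam (R : realType) n (alpha : 'I_n -> 'cV[R]_n) (a0 : 'cV[R]_n) (j : option 'I_n) :=
  if j is Some i then alpha i else - a0.
Definition sa (R : realType) n (alpha : 'I_n -> 'cV[R]_n) (a0 : 'cV[R]_n) (j : option 'I_n)
  : 'cV[R]_n * R := (coroot (gam alpha a0 j), if j is None then 1 else 0).

Section Root.
Variables (R : realType) (n : nat) (Phi : seq 'cV[R]_n) (alpha : 'I_n -> 'cV[R]_n)
  (eta a0 : 'cV[R]_n).
Hypotheses (HPhi : is_irred_root_system Phi) (Hbase : is_base Phi alpha)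
  (Heta : is_highest_dual_root Phi alpha eta) (Ha0 : a0 \in Phi) (Heta0 : eta = coroot a0).
Notation vec := 'cV[R]_n.
Notation mat := 'M[R]_n.
Notation ac := (ac alpha).
Implicit Types (a b x y q lam : vec) (w : mat).

Lemma root_neq0 a : a \in Phi -> a != 0.
Proof. by case: HPhi => [[_ H0]] _ _ _ _ Ha; apply: contraNneq H0 => <-. Qed.
Lemma cryst a b : a \in Phi -> b \in Phi -> dot b (coroot a) \is a Num.int.
Proof. by case: HPhi => _ _ H _ _; exact: H. Qed.
Lemma refl_root a b : a \in Phi -> b \in Phi -> reflmx a *m b \in Phi.
Proof. by case: HPhi => _ H _ _ _; exact: H. Qed.
Lemma refl_self a : a != 0 -> reflmx a *m a = - a.
Proof.
move=> Ha; rewrite refl_act coroot_dot // scaler_nat mulr2n opprD addrA subrr add0r //.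
Qed.
Lemma rootN a : a \in Phi -> - a \in Phi.
Proof. by move=> Ha; rewrite -refl_self ?root_neq0 // refl_root. Qed.
Lemma refl_sq a : reflmx a *m reflmx a = 1%:M.
Proof. by apply: mx_ext => x; rewrite -mulmxA refl_invol mul1mx. Qed.

Lemma W_dp w : inW Phi w -> dp w.
Proof. by elim => [|a w' _ _ IH]; [exact: dp1 | exact: dpM (dp_refl a) IH]. Qed.
Lemma W_root w a : inW Phi w -> a \in Phi -> w *m a \in Phi.
Proof.
move=> H; elim: H a => [a Ha|b w' Hb _ IH a Ha]; rewrite ?mul1mx // -mulmxA.
by apply: refl_root => //; exact: IH.
Qed.
Lemma W_mul w1 w2 : inW Phi w1 -> inW Phi w2 -> inW Phi (w1 *m w2).
Proof.
by move=> H1 H2; elim: H1 => [|a w Ha _ IH]; rewrite ?mul1mx // -mulmxA; exact: inWS Ha IH.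
Qed.
Lemma W_refl a : a \in Phi -> inW Phi (reflmx a).
Proof. by move=> Ha; have := inWS Ha (inW1 Phi); rewrite mulmx1. Qed.
Lemma W_inv w : inW Phi w -> exists2 w', inW Phi w' & w' *m w = 1%:M.
Proof.
elim => [|a w1 Ha _ [w' Hw' E]]; first by exists 1%:M; [exact: inW1| rewrite mul1mx].
exists (w' *m reflmx a); first by apply: W_mul => //; exact: W_refl.
by rewrite mulmxA -(mulmxA w') refl_sq mulmx1.
Qed.

Lemma Q0 : inQ alpha 0.
Proof. by exists (fun _ => 0); rewrite big1 // => i _; rewrite scale0r. Qed.
Lemma QD x y : inQ alpha x -> inQ alpha y -> inQ alpha (x + y).
Proof.
move=> [k ->] [l ->]; exists (fun i => k i + l i); rewrite -big_split /=.
by apply: eq_bigr => i _; rewrite intrD scalerDl.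
Qed.
Lemma QZ (z : int) x : inQ alpha x -> inQ alpha (z%:~R *: x).
Proof.
move=> [k ->]; exists (fun i => z * k i); rewrite scaler_sumr.
by apply: eq_bigr => i _; rewrite intrM scalerA.
Qed.
Lemma QN x : inQ alpha x -> inQ alpha (- x).
Proof. by move=> H; rewrite -scaleN1r; have := QZ (-1) H; rewrite intrN. Qed.
Lemma QB x y : inQ alpha x -> inQ alpha y -> inQ alpha (x - y).
Proof. by move=> Hx Hy; apply: QD => //; exact: QN. Qed.
Lemma QZr (c : R) x : c \is a Num.int -> inQ alpha x -> inQ alpha (c *: x).
Proof. by move=> /intrP [z ->]; exact: QZ. Qed.
Lemma Q_root a : a \in Phi -> inQ alpha a.
Proof. by case: Hbase => _ _ H /H [k [E _]]; exists k. Qed.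
Lemma alpha_root i : alpha i \in Phi.
Proof. by case: Hbase. Qed.
Lemma Q_int q b : inQ alpha q -> b \in Phi -> dot q (coroot b) \is a Num.int.
Proof.
move=> [k ->] Hb; rewrite dot_suml; apply: rpred_sum => i _.
by rewrite dotZl rpredM ?intr_int ?cryst ?alpha_root.
Qed.
Lemma W_Q w q : inW Phi w -> inQ alpha q -> inQ alpha (w *m q).
Proof.
move=> H; elim: H q => [q|a w' Ha _ IH q Hq]; first by rewrite mul1mx.
rewrite -mulmxA refl_act; apply: QB; first exact: IH.
by apply: QZr; [apply: Q_int => //; exact: IH | exact: Q_root].
Qed.

Lemma PD x y : inP alpha x -> inP alpha y -> inP alpha (x + y).
Proof. by move=> Hx Hy i; rewrite dotDl rpredD. Qed.
Lemma PB x y : inP alpha x -> inP alpha y -> inP alpha (x - y).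
Proof. by move=> Hx Hy i; rewrite dotBl rpredB. Qed.
Lemma PZr (c : R) x : c \is a Num.int -> inP alpha x -> inP alpha (c *: x).
Proof. by move=> Hc Hx i; rewrite dotZl rpredM. Qed.
Lemma Q_P q : inQ alpha q -> inP alpha q.
Proof. by move=> Hq i; apply: Q_int => //; exact: alpha_root. Qed.

Lemma alpha_neq0 i : alpha i != 0.
Proof. exact: root_neq0 (alpha_root i). Qed.
Lemma ac_indep (c : 'I_n -> R) : \sum_i c i *: ac i = 0 -> forall i, c i = 0.
Proof.
move=> H i; case: Hbase => _ Hind _.
have := Hind (fun i => c i * (2 / dot (alpha i) (alpha i))).
have -> : \sum_i (c i * (2 / dot (alpha i) (alpha i))) *: alpha i = \sum_i c i *: ac i.
  by apply: eq_bigr => k _; rewrite /ac /coroot scalerA.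
move=> /(_ H i) /eqP; rewrite mulf_eq0 => /orP [/eqP //|].
by rewrite mulf_eq0 invr_eq0 (negbTE (dot_neq0 (alpha_neq0 i))) pnatr_eq0.
Qed.
Lemma ac_uniq (c c' : 'I_n -> R) : \sum_i c i *: ac i = \sum_i c' i *: ac i ->
  forall i, c i = c' i.
Proof.
move=> H i; apply/eqP; rewrite -subr_eq0; apply/eqP; move: i; apply: ac_indep.
rewrite (eq_bigr (fun i => c i *: ac i - c' i *: ac i)) ?sumrB ?H ?subrr //.
by move=> i _; rewrite scalerBl.
Qed.

Lemma n_gt0 : (0 < n)%N.
Proof.
move: (HPhi) => [[Hne _] _ _ _ _].
have [a Ha] : exists a, a \in Phi by case: Phi Hne => [//|a s] _; exists a; rewrite mem_head.
rewrite lt0n; apply/negP => /eqP En; have := root_neq0 Ha.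
move/negP; apply; apply/eqP/matrixP => i j; have := ltn_ord i; by rewrite {2}En.
Qed.

Lemma sum_delta (I : finType) (V : lmodType R) (F : I -> V) j :
  \sum_i (i == j)%:R *: F i = F j.
Proof.
rewrite (bigD1 j) //= eqxx scale1r big1 ?addr0 // => i /negbTE ->; by rewrite scale0r.
Qed.

Lemma eta_coef : exists m : 'I_n -> nat, eta = \sum_i (m i)%:R *: ac i.
Proof.
pose j := Ordinal n_gt0.
case: Heta => _ /(_ _ (alpha_root j)) [k Hk].
exists (fun i => (k i + (i == j))%N).
rewrite (eq_bigr (fun i => (k i)%:R *: ac i + (i == j)%:R *: ac i)); last first.
  by move=> i _; rewrite natrD scalerDl.
by rewrite big_split /= -Hk sum_delta subrK.
Qed.


Section Root2.
Variable m : 'I_n -> nat.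
Hypothesis Hm : eta = \sum_i (m i)%:R *: ac i.
Notation sa := (sa alpha a0).
Notation gam := (gam alpha a0).

Lemma sum_lin (x y : 'I_n -> R) (k : R) :
  \sum_i (x i + k * y i) *: ac i = \sum_i x i *: ac i + k *: \sum_i y i *: ac i.
Proof.
rewrite scaler_sumr -big_split; apply: eq_bigr => i _; by rewrite scalerDl scalerA.
Qed.

Lemma coroot_coef a : a \in Phi -> exists d : 'I_n -> R,
  [/\ coroot a = \sum_i d i *: ac i, (forall i, d i \is a Num.int),
      (forall i, d i <= (m i)%:R) & ((forall i, 0 <= d i) \/ (forall i, d i <= 0))].
Proof.
move=> Ha; case: (Heta) => _ /(_ _ Ha) [k Hk].
have Ed : coroot a = \sum_i ((m i)%:R + (-1) * (k i)%:R) *: ac i.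
  by rewrite sum_lin -Hm -Hk scaleN1r opprB addrC subrK.
exists (fun i => (m i)%:R + (-1) * (k i)%:R); split => //.
- by move=> i; rewrite mulN1r rpredB ?natr_int.
- by move=> i; rewrite mulN1r lerBlDr lerDl ler0n.
case: Hbase => _ _ /(_ _ Ha) [z [Ez Hs]].
pose e i := (2 / dot a a) * (z i)%:~R * (dot (alpha i) (alpha i) / 2).
have Ee : coroot a = \sum_i e i *: ac i.
  transitivity ((2 / dot a a) *: \sum_i (z i)%:~R *: alpha i); first by rewrite -Ez.
  rewrite scaler_sumr; apply: eq_bigr => i _.
  rewrite /ac /coroot !scalerA; congr (_ *: _); rewrite /e.
  have := dot_neq0 (alpha_neq0 i); set t := dot (alpha i) (alpha i) => Ht.
  by field; rewrite Ht dot_neq0 // root_neq0.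
have Hde := ac_uniq (etrans (esym Ed) Ee).
have Hc : 0 < 2 / dot a a by rewrite divr_gt0 ?dot_gt0 ?root_neq0.
have Hc' i : 0 < dot (alpha i) (alpha i) / 2 by rewrite divr_gt0 ?dot_gt0 ?alpha_neq0.
case: Hs => Hs; [left|right] => i; rewrite Hde /e.
  by apply: mulr_ge0; [apply: mulr_ge0; [exact: ltW | by rewrite ler0z Hs] | exact: ltW (Hc' i)].
rewrite -mulrA mulrC -mulrA; apply: mulr_le0_ge0; first by rewrite lerz0 Hs.
by rewrite mulr_ge0 // ltW.
Qed.

Lemma P_int lam a : inP alpha lam -> a \in Phi -> dot lam (coroot a) \is a Num.int.
Proof.
move=> Hl Ha; have [d [-> Hd _ _]] := coroot_coef Ha.
rewrite dot_sumr; apply: rpred_sum => i _; rewrite dotZr rpredM ?Hd //; exact: Hl.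
Qed.

Lemma W_P w lam : inW Phi w -> inP alpha lam -> inP alpha (w *m lam).
Proof.
move=> H; elim: H lam => [lam|a w' Ha _ IH lam Hl]; first by rewrite mul1mx.
rewrite -mulmxA refl_act; apply: PB; first exact: IH.
by apply: PZr; [apply: P_int => //; exact: IH | apply: Q_P; exact: Q_root].
Qed.

Lemma gam_root j : gam j \in Phi.
Proof. by case: j => [i|] /=; [exact: alpha_root | exact: rootN]. Qed.

Lemma sa_None1 : (sa None).1 = - eta.
Proof. by rewrite /= corootN Heta0. Qed.

Lemma sum_sa1 (c : option 'I_n -> R) :
  \sum_j c j *: (sa j).1 = \sum_i c (Some i) *: ac i - c None *: eta.
Proof. by rewrite sum_opt sa_None1 scalerN addrC. Qed.
Lemma sum_sa2 (c : option 'I_n -> R) : \sum_j c j * (sa j).2 = c None.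
Proof. by rewrite sum_opt /= mulr1 big1 ?addr0 // => i _; rewrite mulr0. Qed.

Definition isAR (f : vec * R) :=
  (exists2 a, a \in Phi & f.1 = coroot a) /\ f.2 \is a Num.int.
Definition pos (f : vec * R) := exists2 c : option 'I_n -> R, (forall j, 0 <= c j) &
  f.1 = \sum_j c j *: (sa j).1 /\ f.2 = \sum_j c j * (sa j).2.

Lemma comb_uniq (c : option 'I_n -> R) : \sum_j c j *: (sa j).1 = 0 ->
  \sum_j c j * (sa j).2 = 0 -> forall j, c j = 0.
Proof.
rewrite sum_sa1 sum_sa2 => H1 H0; rewrite H0 scale0r subr0 in H1.
by case => [i|//]; exact: ac_indep H1 i.
Qed.

Lemma decomp1 a (k : R) (d : 'I_n -> R) : a \in Phi -> coroot a = \sum_i d i *: ac i ->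
  (forall i, 0 <= d i) -> (forall i, d i <= (m i)%:R) -> k \is a Num.int ->
  (0 <= k -> pos (coroot a, k)) /\ (k < 0 -> pos (fneg (coroot a, k))).
Proof.
move=> Ha Hd Hd0 Hdm Hk; split => Hk0.
  exists (fun j => if j is Some i then d i + k * (m i)%:R else k).
    by case => [i|//]; rewrite addr_ge0 ?mulr_ge0.
  by rewrite sum_sa1 sum_sa2 /= sum_lin -Hm -Hd addrK.
have Hk1 : 1 <= - k.
  move: Hk Hk0 => /intrP [z ->]; rewrite ltrz0 -rmorphN /= => Hz.
  rewrite ler1z; lia.
exists (fun j => if j is Some i then (- d i) + (- k) * (m i)%:R else - k).
  case => [i|]; last by rewrite ltW // (lt_le_trans ltr01).
  have := Hdm i; have : 0 <= (m i)%:R :> R by rewrite ler0n.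
  by move=> H1 H2; nra.
rewrite sum_sa1 sum_sa2 /= sum_lin -Hm; split => //.
rewrite (eq_bigr (fun i => - (d i *: ac i))); last by move=> i _; rewrite scaleNr.
by rewrite sumrN -Hd /fneg /= addrK.
Qed.


Lemma decomp f : isAR f -> pos f \/ pos (fneg f).
Proof.
case: f => b k [[a Ha /= ->] /= Hk].
have [d [Hd _ Hdm Hs]] := coroot_coef Ha.
have HaN := rootN Ha.
have [d' [Hd' _ Hdm' _]] := coroot_coef HaN.
have Hdd : forall i, d' i = - d i.
  apply: ac_uniq; rewrite -Hd' corootN Hd -sumrN; apply: eq_bigr => i _.
  by rewrite scaleNr.
case: Hs => Hs.
  have [H1 H2] := decomp1 Ha Hd Hs Hdm Hk.
  by have [Hk0|Hk0] := leP 0 k; [left; exact: H1 | right; exact: H2].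
have Hs' : forall i, 0 <= d' i by move=> i; rewrite Hdd oppr_ge0.
have HkN : - k \is a Num.int by rewrite rpredN.
have [H1 H2] := decomp1 HaN Hd' Hs' Hdm' HkN.
have [Hk0|Hk0] := leP 0 (- k).
  by right; have := H1 Hk0; rewrite /fneg /= corootN.
by left; have := H2 Hk0; rewrite /fneg /= corootN !opprK.
Qed.

Lemma isAR_neq0 f : isAR f -> f.1 != 0.
Proof. by case=> [[a Ha ->] _]; rewrite coroot_eq0 root_neq0. Qed.

Lemma isAR_fneg f : isAR f -> isAR (fneg f).
Proof.
case=> [[a Ha E] Hk]; split; last by rewrite rpredN.
by exists (- a); rewrite ?rootN //= E corootN.
Qed.

Lemma sum_add1 (c c' : option 'I_n -> R) :
  \sum_j (c j + c' j) *: (sa j).1 = \sum_j c j *: (sa j).1 + \sum_j c' j *: (sa j).1.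
Proof. by rewrite -big_split; apply: eq_bigr => j _; rewrite scalerDl. Qed.
Lemma sum_add2 (c c' : option 'I_n -> R) :
  \sum_j (c j + c' j) * (sa j).2 = \sum_j c j * (sa j).2 + \sum_j c' j * (sa j).2.
Proof. by rewrite -big_split; apply: eq_bigr => j _; rewrite mulrDl. Qed.

Lemma excl f : isAR f -> pos f -> pos (fneg f) -> False.
Proof.
move=> Hf [c Hc [E1 E2]] [c' Hc' [E1' E2']].
have H0 := comb_uniq (c := fun j => c j + c' j).
have Hz : forall j, c j = 0.
  move=> j; have := H0 _ _ j.
  rewrite sum_add1 sum_add2 -E1 -E2 -E1' -E2' /fneg /= !subrr => /(_ erefl erefl) Hj.
  by apply/eqP; rewrite eq_le Hc andbT -Hj lerDl.
have := isAR_neq0 Hf; rewrite E1 big1 ?eqxx // => j _; by rewrite Hz scale0r.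
Qed.

Definition inA x := forall j, 0 <= ev (sa j) x.

Lemma pos_ev f x : pos f -> inA x -> 0 <= ev f x.
Proof.
move=> [c Hc [E1 E2]] Hx; rewrite /ev E1 E2 dot_sumr -big_split /=.
apply: sumr_ge0 => j _; rewrite dotZr -mulrDr; apply: mulr_ge0 => //; exact: Hx.
Qed.

Lemma ev_fneg f x : ev (fneg f) x = - ev f x.
Proof. by rewrite /ev /fneg /= dotNr opprD. Qed.

Lemma sa_isAR j : isAR (sa j).
Proof.
split; first by exists (gam j); rewrite ?gam_root.
by case: j => [i|] /=; rewrite ?rpred0 ?rpred1.
Qed.

Lemma sa_pos j : pos (sa j).
Proof.
exists (fun j' => (j' == j)%:R); first by move=> j'; rewrite ler0n.
split; first by rewrite sum_delta.
rewrite (bigD1 j) //= eqxx mul1r big1 ?addr0 // => i /negbTE ->; by rewrite mul0r.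
Qed.

Definition inG (g : mat * vec) := inW Phi g.1 /\ inQ alpha g.2.

Lemma G_dp g : inG g -> dp g.1.
Proof. by case=> H _; exact: W_dp. Qed.
Lemma G_mul g h : inG g -> inG h -> inG (aff_mul g h).
Proof.
move=> [Hg1 Hg2] [Hh1 Hh2]; split; first exact: W_mul.
by apply: QD => //; exact: W_Q.
Qed.
Lemma G_1 : inG (aff1 R n).
Proof. by split; [exact: inW1 | exact: Q0]. Qed.
Lemma G_refl f : isAR f -> inG (refl f).
Proof.
case=> [[a Ha E] Hk]; rewrite /refl E corootK; split; first exact: W_refl.
by apply: QZr; [rewrite rpredN | exact: Q_root].
Qed.

Lemma act_isAR g f : inG g -> isAR f -> isAR (act g f).
Proof.
move=> Hg [[a Ha E] Hk]; have Hdp := G_dp Hg.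
have Hr : g.1 *m a \in Phi by apply: W_root => //; case: Hg.
split; first by exists (g.1 *m a); rewrite //= E dp_coroot.
rewrite /= rpredB // E dp_coroot //; apply: Q_int => //; by case: Hg.
Qed.

Definition sr j := refl (sa j).

Lemma sa_neq0 j : (sa j).1 != 0.
Proof. exact: isAR_neq0 (sa_isAR j). Qed.

Lemma act_sr_sa j : act (sr j) (sa j) = fneg (sa j).
Proof.
rewrite /sr act_refl ?sa_neq0 // coroot_dot ?sa_neq0 // /fneg; congr pair; last by ring.
by rewrite scaler_nat mulr2n opprD addrA subrr add0r.
Qed.

Lemma Red f c j : isAR f -> 0 <= c -> f.1 = c *: (sa j).1 -> c = 1.
Proof.
case=> [[b Hb E] _] Hc; rewrite E => Eb.
have Hc0 : c != 0.
  apply: contraTneq (root_neq0 Hb) => Ec; apply/negPn/eqP.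
  by rewrite -(corootK b) Eb Ec scale0r coroot0.
have : c^-1 *: gam j \in Phi.
  by rewrite -[gam j]corootK -corootZ // -Eb corootK.
case: HPhi => _ _ _ Hred _ /(Hred _ _ (gam_root j)) [/eqP|Ec].
  by rewrite invr_eq1 => /eqP.
by move: Hc; rewrite -(invrK c) Ec invrN1 oppr_ge0 ler10.
Qed.


Lemma sum_sub1 (c c' : option 'I_n -> R) :
  \sum_j (c j - c' j) *: (sa j).1 = \sum_j c j *: (sa j).1 - \sum_j c' j *: (sa j).1.
Proof. by rewrite -sumrB; apply: eq_bigr => j _; rewrite scalerBl. Qed.
Lemma sum_sub2 (c c' : option 'I_n -> R) :
  \sum_j (c j - c' j) * (sa j).2 = \sum_j c j * (sa j).2 - \sum_j c' j * (sa j).2.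
Proof. by rewrite -sumrB; apply: eq_bigr => j _; rewrite mulrBl. Qed.
Lemma sum_d1 (s : R) (j : option 'I_n) : \sum_k (s * (k == j)%:R) *: (sa k).1 = s *: (sa j).1.
Proof.
rewrite (bigD1 j) //= eqxx mulr1 big1 ?addr0 // => i /negbTE ->; by rewrite mulr0 scale0r.
Qed.
Lemma sum_d2 (s : R) (j : option 'I_n) : \sum_k (s * (k == j)%:R) * (sa k).2 = s * (sa j).2.
Proof.
rewrite (bigD1 j) //= eqxx mulr1 big1 ?addr0 // => i /negbTE ->; by rewrite mulr0 mul0r.
Qed.
Lemma sum_d0 (s : R) (j : option 'I_n) : \sum_k (s * (k == j)%:R) = s.
Proof.
rewrite (bigD1 j) //= eqxx mulr1 big1 ?addr0 // => i /negbTE ->; by rewrite mulr0.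
Qed.

Lemma sr_G j : inG (sr j).
Proof. exact: G_refl (sa_isAR j). Qed.

Lemma act_sr j f : act (sr j) f =
  (f.1 - dot f.1 (coroot (sa j).1) *: (sa j).1, f.2 - dot f.1 (coroot (sa j).1) * (sa j).2).
Proof. by rewrite /sr act_refl ?sa_neq0. Qed.

Lemma LemmaA j f : isAR f -> pos f -> f != sa j -> pos (act (sr j) f).
Proof.
move=> Hf Hp Hne; have Hh := act_isAR (sr_G j) Hf.
case: (decomp Hh) => // Hn; exfalso; move: Hne; apply/negP/negPn/eqP.
case: Hp => c Hc [E1 E2]; case: Hn => c' Hc' [E1' E2'].
rewrite act_sr /fneg /= in E1' E2'.
set mu := dot f.1 (coroot (sa j).1) in E1' E2'.
pose c2 := fun k => (c k + c' k) - mu * (k == j)%:R.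
have Hz := comb_uniq (c := c2).
have H1 : \sum_k c2 k *: (sa k).1 = 0.
  by rewrite /c2 sum_sub1 sum_add1 sum_d1 -E1 -E1' opprB (addrC f.1) subrK subrr.
have H2 : \sum_k c2 k * (sa k).2 = 0.
  by rewrite /c2 sum_sub2 sum_add2 sum_d2 -E2 -E2' opprB (addrC f.2) subrK subrr.
have Hk : forall k, k != j -> c k = 0.
  move=> k /negbTE Hkj; have := Hz H1 H2 k; rewrite /c2 Hkj mulr0 subr0 => Hs.
  by apply/eqP; rewrite eq_le Hc andbT -Hs lerDl.
have F1 : f.1 = c j *: (sa j).1.
  rewrite E1 (bigD1 j) //= big1 ?addr0 // => k Hkj; by rewrite Hk ?scale0r.
have F2 : f.2 = c j * (sa j).2.
  rewrite E2 (bigD1 j) //= big1 ?addr0 // => k Hkj; by rewrite Hk ?mul0r.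
have Hcj := Red Hf (Hc j) F1.
by move: F1 F2; rewrite Hcj scale1r mul1r => F1 F2; rewrite [LHS]surjective_pairing F1 F2 -surjective_pairing.
Qed.

Definition weval (ts : seq (option 'I_n)) :=
  foldr (fun t g => aff_mul (sr t) g) (aff1 R n) ts.

Lemma weval_cat s1 s2 : weval (s1 ++ s2) = aff_mul (weval s1) (weval s2).
Proof. by elim: s1 => [|t s IH] /=; rewrite ?aff_mul1g // IH aff_mulA. Qed.
Lemma weval_rcons u j : weval (rcons u j) = aff_mul (weval u) (sr j).
Proof. by rewrite -cats1 weval_cat /= aff_mulg1. Qed.
Lemma weval_G ts : inG (weval ts).
Proof. by elim: ts => [|t ts IH] /=; [exact: G_1 | apply: G_mul => //; exact: sr_G]. Qed.

Lemma Del ts f : isAR f -> pos f -> pos (fneg (act (weval ts) f)) ->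
  exists ts1 t ts2, ts = ts1 ++ t :: ts2 /\ act (weval ts2) f = sa t.
Proof.
move=> Hf Hp; elim: ts => [|t ts IH] /=.
  by rewrite act1 => Hn; case: (excl Hf Hp Hn).
rewrite act_mul; last exact: (G_dp (sr_G t)).
have Hh := act_isAR (weval_G ts) Hf.
case: (decomp Hh) => [Hph|Hnh] Hn.
- exists [::], t, ts; split => //.
  case: (eqVneq (act (weval ts) f) (sa t)) => // Hne.
  by case: (excl (act_isAR (sr_G t) Hh) (LemmaA Hh Hph Hne) Hn).
- have [ts1 [t' [ts2 [-> E]]]] := IH Hnh.
  by exists (t :: ts1), t', ts2.
Qed.


Lemma act_srK j f : act (sr j) (act (sr j) f) = f.
Proof. by rewrite -act_mul ?refl_refl ?act1 //; exact: (G_dp (sr_G j)). Qed.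

Lemma Gen1 N : forall f (c : option 'I_n -> R), isAR f -> (forall j, 0 <= c j) ->
  f.1 = \sum_j c j *: (sa j).1 -> f.2 = \sum_j c j * (sa j).2 -> \sum_j c j <= N%:R ->
  exists ts j, f = act (weval ts) (sa j).
Proof.
elim: N => [|N IH] f c Hf Hc E1 E2 HN.
  exfalso; have Hz : forall j, c j = 0.
    move=> j; apply/eqP; rewrite eq_le Hc andbT; apply: le_trans HN.
    by rewrite (bigD1 j) //= lerDl sumr_ge0.
  by move: (isAR_neq0 Hf); rewrite E1 big1 ?eqxx // => j _; rewrite Hz scale0r.
have Hd : 0 < dot f.1 f.1 by rewrite dot_gt0 ?isAR_neq0.
have [j Hj] : exists j, 0 < c j * dot f.1 (sa j).1.
  case: (pickP (fun j => 0 < c j * dot f.1 (sa j).1)) => [j Hj|Hnone]; first by exists j.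
  exfalso; have : \sum_j dot f.1 (c j *: (sa j).1) <= 0.
    by apply: sumr_le0 => j _; rewrite dotZr leNgt Hnone.
  by rewrite -dot_sumr -E1 leNgt Hd.
have Hdj : 0 < dot f.1 (sa j).1.
  rewrite ltNge; apply/negP => Hle; move: Hj; rewrite ltNge mulr_ge0_le0 //.
case: (eqVneq f (sa j)) => [->|Hne]; first by exists [::], j; rewrite act1.
have Hp : pos f by exists c.
have := act_sr j f; set mu := dot f.1 (coroot (sa j).1) => Eh.
have Hmu : 1 <= mu.
  have Hmu0 : 0 < mu.
    by rewrite /mu /coroot dotZr mulr_gt0 // divr_gt0 // dot_gt0 // sa_neq0.
  have Hmuint : mu \is a Num.int.
    case: Hf => [[b Hb Eb] _]; rewrite /mu Eb /= corootK dotC; exact: cryst Hb (gam_root j).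
  by move: Hmuint Hmu0 => /intrP [z ->]; rewrite ltr0z ler1z.
have Hh := act_isAR (sr_G j) Hf.
have [c'' Hc'' [E1'' E2'']] := LemmaA Hf Hp Hne.
have Hcc : forall k, c'' k = c k - mu * (k == j)%:R.
  move=> k; apply/eqP; rewrite -subr_eq0; apply/eqP; move: k.
  apply: comb_uniq.
    by rewrite sum_sub1 sum_sub1 sum_d1 -E1 -E1'' Eh /= subrr.
  by rewrite sum_sub2 sum_sub2 sum_d2 -E2 -E2'' Eh /= subrr.
have HsN : \sum_j c'' j <= N%:R.
  rewrite (eq_bigr _ (fun k _ => Hcc k)) sumrB sum_d0.
  by rewrite lerBlDr; apply: le_trans HN _; rewrite -natr1 lerD2l.
have [ts [t Et]] := IH _ c'' Hh Hc'' E1'' E2'' HsN.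
exists (j :: ts), t; rewrite /= act_mul; last exact: (G_dp (sr_G j)).
by rewrite -Et act_srK.
Qed.

Lemma Gen2 f : isAR f -> exists ts j,
  f = act (weval ts) (sa j) \/ fneg f = act (weval ts) (sa j).
Proof.
move=> Hf; case: (decomp Hf) => [[c Hc [E1 E2]]|[c Hc [E1 E2]]].
  have Hs : 0 <= \sum_j c j by apply: sumr_ge0.
  have [ts [j E]] := Gen1 Hf Hc E1 E2 (ltW (archi_boundP Hs)).
  by exists ts, j; left.
have Hs : 0 <= \sum_j c j by apply: sumr_ge0.
have [ts [j E]] := Gen1 (isAR_fneg Hf) Hc E1 E2 (ltW (archi_boundP Hs)).
by exists ts, j; right.
Qed.

Definition Gw (g : mat * vec) := exists ts, g = weval ts.

Lemma weval_rev ts : weval (ts ++ rev ts) = aff1 R n.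
Proof.
elim: ts => [|t ts IH] //=.
by rewrite rev_cons -rcons_cat weval_rcons IH aff_mul1g refl_refl.
Qed.

Lemma Gen3 f : isAR f -> Gw (refl f).
Proof.
move=> Hf; have [ts [j Ej]] := Gen2 Hf.
have : Gw (refl (act (weval ts) (sa j))).
  exists (ts ++ j :: rev ts); rewrite weval_cat /= -aff_mulA.
  rewrite [aff_mul (weval ts) _]refl_conj; last exact: G_dp (weval_G ts).
  by rewrite aff_mulA -weval_cat weval_rev aff_mulg1.
by case: Ej => <- //; rewrite refl_fneg.
Qed.

Lemma Gw_mul g h : Gw g -> Gw h -> Gw (aff_mul g h).
Proof. by move=> [s1 ->] [s2 ->]; exists (s1 ++ s2); rewrite weval_cat. Qed.

Lemma GwW w : inW Phi w -> Gw (w, 0).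
Proof.
elim => [|a w1 Ha _ IH]; first by exists [::].
have HAR : isAR (coroot a, 0) by split; [exists a | rewrite rpred0].
have := Gw_mul (Gen3 HAR) IH.
by rewrite /refl /aff_mul /= corootK oppr0 scale0r mulmx0 addr0.
Qed.

Lemma Gw_add u v : Gw (1%:M, u) -> Gw (1%:M, v) -> Gw (1%:M, u + v).
Proof.
move=> Hu Hv; have := Gw_mul Hu Hv.
by rewrite /aff_mul /= mul1mx mul1mx addrC.
Qed.

Lemma GwT1 i : Gw (1%:M, alpha i) /\ Gw (1%:M, - alpha i).
Proof.
have H1 : isAR (ac i, -1) by split; [exists (alpha i); rewrite ?alpha_root | rewrite rpredN rpred1].
have H0 : isAR (ac i, 0) by split; [exists (alpha i); rewrite ?alpha_root | rewrite rpred0].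
split.
  have := Gw_mul (Gen3 H1) (Gen3 H0).
  by rewrite /refl /aff_mul /ac /= corootK refl_sq oppr0 scale0r mulmx0 add0r opprK scale1r.
have := Gw_mul (Gen3 H0) (Gen3 H1).
rewrite /refl /aff_mul /ac /= corootK refl_sq oppr0 scale0r addr0 opprK scale1r.
by rewrite refl_self ?alpha_neq0.
Qed.

Lemma GwT (z : int) i : Gw (1%:M, z%:~R *: alpha i).
Proof.
case: z => k.
  elim: k => [|k IH]; first by exists [::]; rewrite /= scale0r.
  have := Gw_add (GwT1 i).1 IH.
  suff -> : (Posz k.+1)%:~R *: alpha i = alpha i + (Posz k)%:~R *: alpha i by [].
  rewrite -{2}(scale1r (alpha i)) -scalerDl; congr (_ *: _).
  by rewrite intS intrD rmorph1.
elim: k => [|k IH]; first by have := (GwT1 i).2; rewrite NegzE /= scaleN1r.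
have := Gw_add (GwT1 i).2 IH.
suff -> : (Negz k.+1)%:~R *: alpha i = - alpha i + (Negz k)%:~R *: alpha i by [].
rewrite -[in RHS]scaleN1r -scalerDl; congr (_ *: _).
rewrite !NegzE !intrN (intS k.+1) intrD rmorph1; ring.
Qed.

Lemma GwQ q : inQ alpha q -> Gw (1%:M, q).
Proof.
move=> [k ->]; elim/big_rec: _ => [|i x _ Hx]; first by exists [::].
exact: Gw_add (GwT (k i) i) Hx.
Qed.

Lemma Gen4 g : inG g -> Gw g.
Proof.
case: g => w q [/= Hw Hq]; have := Gw_mul (GwQ Hq) (GwW Hw).
by rewrite /aff_mul /= mul1mx mulmx0 add0r.
Qed.

Lemma K N ts : (size ts <= N)%N -> forall x, inA x ->
  inA (aff_act (weval ts) x) -> aff_act (weval ts) x = x.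
Proof.
elim: N ts => [|N IH] ts.
  by rewrite leqn0 size_eq0 => /eqP -> x _ _; rewrite aff_act1.
case/lastP: ts => [|u j]; first by move=> _ x _ _; rewrite aff_act1.
rewrite size_rcons ltnS => Hs x Hx Hy.
have Hf := act_isAR (weval_G (rcons u j)) (sa_isAR j).
case: (decomp Hf) => Hpf.
- have Hn : pos (fneg (act (weval u) (sa j))).
    move: Hpf; rewrite weval_rcons act_mul; last exact: G_dp (weval_G u).
    by rewrite act_sr_sa act_fneg.
  have [u1 [t [u2 [Eu Et]]]] := Del (sa_isAR j) (sa_pos j) Hn.
  have Eg : weval (rcons u j) = weval (u1 ++ u2).
    rewrite Eu weval_rcons !weval_cat /= !aff_mulA.
    rewrite [aff_mul (weval u2) _]refl_conj; last exact: G_dp (weval_G u2).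
    by rewrite Et /sr -(aff_mulA (refl (sa t))) refl_refl aff_mul1g.
  rewrite Eg; apply: IH; last by rewrite -Eg.
    by move: Hs; rewrite Eu !size_cat /=; lia.
  exact: Hx.
- have Hev : ev (sa j) x = 0.
    apply/eqP; rewrite eq_le Hx andbT.
    have := pos_ev Hpf Hy; rewrite ev_fneg ev_act ?oppr_ge0 //.
    exact: G_dp (weval_G _).
  have Hsx : aff_act (sr j) x = x by rewrite /sr refl_aff Hev scale0r subr0.
  have Eg : aff_act (weval (rcons u j)) x = aff_act (weval u) x.
    by rewrite weval_rcons aff_actM Hsx.
  rewrite Eg; apply: IH => //; by rewrite -Eg.
Qed.

Lemma Uniq g x : inG g -> inA x -> inA (aff_act g x) -> aff_act g x = x.
Proof. by move=> Hg; have [ts ->] := Gen4 Hg; apply: (K (leqnn (size ts))). Qed.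


Lemma p_exists : exists p t, 0 < t /\ forall j, ev (sa j) p = t.
Proof.
pose B : mat := \matrix_(i, k) (ac i) k 0.
have HB : B \in unitmx.
  rewrite unitmxE unitfE; apply/negP => /det0P [v Hv0 Hv]; move/negP: Hv0; apply.
  have H : \sum_i v 0 i *: ac i = 0.
    apply/matrixP => k l; rewrite ord1.
    transitivity ((v *m B) 0 k); last by rewrite Hv !mxE.
    rewrite summxE !mxE; apply: eq_bigr => i _; by rewrite !mxE.
  apply/eqP/matrixP => i k; rewrite ord1 mxE; exact: ac_indep H k.
pose t : R := (1 + \sum_i (m i)%:R)^-1.
have Hs : 0 <= \sum_i (m i)%:R :> R by apply: sumr_ge0 => i _; rewrite ler0n.
have Ht : 0 < t by rewrite invr_gt0 ltr_pwDl.
pose p : vec := invmx B *m const_mx t.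
have Hdp : forall i, dot p (ac i) = t.
  move=> i; have : (B *m p) i 0 = t by rewrite mulmxA mulmxV // mul1mx mxE.
  rewrite mxE dotE => <-; apply: eq_bigr => k _; by rewrite [B _ _]mxE mulrC.
exists p, t; split => // -[i|]; first by rewrite /ev /= addr0; exact: Hdp.
rewrite /ev /= corootN -Heta0 dotNr Hm dot_sumr.
rewrite (eq_bigr (fun i => t * (m i)%:R)); last by move=> i _; rewrite dotZr Hdp mulrC.
rewrite -mulr_sumr /t; field.
apply: lt0r_neq0; apply: (lt_le_trans ltr01); by rewrite lerDl.
Qed.

Section Root3.
Variables (p : vec) (t : R) (M : nat).
Hypotheses (Ht : 0 < t) (Hp : forall j, ev (sa j) p = t) (HM : (0 < M)%N).

Let D x := dot (x - p) (x - p).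
Let S := \sum_j dot (sa j).1 (sa j).1.
Lemma S_ge j : dot (sa j).1 (sa j).1 <= S.
Proof. by rewrite /S (bigD1 j) //= lerDl sumr_ge0 // => k _; exact: dot_ge0. Qed.
Lemma S_gt0 : 0 < S.
Proof. exact: lt_le_trans (dot_gt0 (sa_neq0 None)) (S_ge None). Qed.
Let delta := 4 * t / (M%:R * S).
Lemma HMr : 0 < M%:R :> R.
Proof. by rewrite ltr0n. Qed.
Lemma delta_gt0 : 0 < delta.
Proof. by rewrite /delta divr_gt0 ?mulr_gt0 ?S_gt0 ?HMr. Qed.

Lemma D_refl j x : D (aff_act (sr j) x) =
  D x + 4 / dot (sa j).1 (sa j).1 * ev (sa j) x * t.
Proof.
rewrite /D /sr refl_aff -(Hp j) /ev.
set b := (sa j).1; set k := (sa j).2; have Hb : dot b b != 0 := dot_neq0 (sa_neq0 j); clearbody b k.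
have -> : x - (dot x b + k) *: coroot b - p = (x - p) - (dot x b + k) *: coroot b.
  by rewrite addrAC.
rewrite !(dotBl, dotBr, dotZl, dotZr) /coroot ?(dotZl, dotZr, dotBl) (dotC b x) (dotC b p).
rewrite (dotC p x); field; exact: Hb.
Qed.

Lemma ev_int lam j : inP alpha lam -> M%:R * ev (sa j) (M%:R^-1 *: lam) \is a Num.int.
Proof.
move=> Hl; rewrite /ev dotZl mulrDr mulrA mulfV ?lt0r_neq0 ?HMr // mul1r.
rewrite rpredD ?rpredM ?natr_int //; first by apply: P_int => //; exact: gam_root.
by case: (sa_isAR j).
Qed.

Lemma ev_neg lam j : inP alpha lam -> ev (sa j) (M%:R^-1 *: lam) < 0 ->
  ev (sa j) (M%:R^-1 *: lam) <= - M%:R^-1.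
Proof.
move=> Hl; have := ev_int j Hl; set e := ev _ _ => He He0.
rewrite -(ler_pM2l HMr) mulrN mulfV ?lt0r_neq0 ?HMr //.
move: He; have : M%:R * e < 0 by rewrite pmulr_rlt0 ?HMr.
move=> H /intrP [z Hz]; move: H; rewrite Hz ltrz0 => Hz0.
by rewrite -(rmorph1 (intmul 1 : int -> R)) -rmorphN /= ler_int; lia.
Qed.

Lemma D_step lam j : inP alpha lam -> ev (sa j) (M%:R^-1 *: lam) < 0 ->
  D (aff_act (sr j) (M%:R^-1 *: lam)) <= D (M%:R^-1 *: lam) - delta.
Proof.
move=> Hl He; have He' := ev_neg Hl He.
rewrite D_refl lerD2l /delta.
set e := ev _ _ in He He' *.
set B := dot (sa j).1 (sa j).1.
have HB : 0 < B by exact: dot_gt0 (sa_neq0 j).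
have HBS : B <= S by exact: S_ge.
have HS := S_gt0.
have HiB : 0 < B^-1 by rewrite invr_gt0.
have HiM : 0 < M%:R^-1 :> R by rewrite invr_gt0 HMr.
have HiBS : S^-1 <= B^-1 by rewrite lef_pV2 ?posrE.
rewrite invfM.
have h1 : 0 <= B^-1 * t by rewrite mulr_ge0 ?ltW.
have h2 : 0 <= t * M%:R^-1 by rewrite mulr_ge0 ?ltW.
have k1 : B^-1 * e <= - (M%:R^-1 * S^-1).
  apply: le_trans (ler_wpM2l (ltW HiB) He') _.
  rewrite mulrN lerN2 (mulrC B^-1); apply: ler_wpM2l; [exact: ltW | exact: HiBS].
have -> : 4 / B * e * t = (4 * t) * (B^-1 * e) by ring.
have -> : - (4 * t * (M%:R^-1 / S)) = (4 * t) * (- (M%:R^-1 * S^-1)) by ring.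
apply: ler_wpM2l k1; rewrite mulr_ge0 // ltW //.
Qed.

Lemma E_main N : forall lam, inP alpha lam -> D (M%:R^-1 *: lam) <= N%:R * delta ->
  exists g, inG g /\ inA (aff_act g (M%:R^-1 *: lam)).
Proof.
elim: N => [|N IH] lam Hl HD;
  (case: (pickP (fun j => ev (sa j) (M%:R^-1 *: lam) < 0)) => [j Hj|Hnone];
   last by exists (aff1 R n); split; [exact: G_1 | move=> j; rewrite aff_act1 leNgt Hnone]).
- have := D_step Hl Hj; move: HD; rewrite mul0r => HD H.
  have := dot_ge0 (aff_act (sr j) (M%:R^-1 *: lam) - p).
  have := delta_gt0; rewrite -/(D _); lra.
set lam' := (sr j).1 *m lam + M%:R *: (sr j).2.
have Hact : aff_act (sr j) (M%:R^-1 *: lam) = M%:R^-1 *: lam'.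
  rewrite /aff_act /lam' scalerDr -scalemxAr scalerA mulVf ?lt0r_neq0 ?HMr // scale1r.
  by [].
have Hl' : inP alpha lam'.
  apply: PD; first by apply: W_P => //; case: (sr_G j).
  apply: Q_P; apply: QZr; first exact: natr_int.
  by case: (sr_G j).
have := D_step Hl Hj; rewrite Hact => H.
have [g [Hg HA]] : exists g, inG g /\ inA (aff_act g (M%:R^-1 *: lam')).
  apply: IH => //; apply: le_trans H _; move: HD; rewrite -natr1 mulrDl mul1r; lra.
exists (aff_mul g (sr j)); split; first by apply: G_mul => //; exact: sr_G.
by rewrite aff_actM Hact.
Qed.

Lemma Exist lam : inP alpha lam -> exists g, inG g /\ inA (aff_act g (M%:R^-1 *: lam)).
Proof.
move=> Hl; set x := M%:R^-1 *: lam.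
have Hd := delta_gt0.
have H0 : 0 <= D x / delta by rewrite divr_ge0 ?dot_ge0 ?ltW.
apply: (E_main (N := Num.Def.archi_bound (D x / delta))) => //.
have := archi_boundP H0; rewrite ltr_pdivrMr // => H; exact: ltW.
Qed.

End Root3.

End Root2.
End Root.


Section Fin.
Variables (R : realType) (n : nat) (alpha : 'I_n -> 'cV[R]_n) (M : nat).

Lemma cong_refl x : congMQ alpha M x x.
Proof. by exists 0; [exact: Q0 | rewrite subrr scaler0]. Qed.
Lemma cong_sym x y : congMQ alpha M x y -> congMQ alpha M y x.
Proof. by case=> q Hq E; exists (- q); [exact: QN | rewrite scalerN -E opprB]. Qed.
Lemma cong_trans x y z : congMQ alpha M x y -> congMQ alpha M y z -> congMQ alpha M x z.
Proof.
case=> q Hq E [q' Hq' E']; exists (q + q'); first exact: QD.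
by rewrite scalerDr -E -E' addrA subrK.
Qed.

Lemma inA_inFv (a0 eta : 'cV[R]_n) x : eta = coroot a0 -> inA alpha a0 x -> inFv alpha eta x.
Proof.
move=> Heta0 Hx; split => [i|]; first by have := Hx (Some i); rewrite /ev /= addr0.
have := Hx None; rewrite /ev /= corootN -Heta0 dotNr; lra.
Qed.
Lemma inFv_inA (a0 eta : 'cV[R]_n) x : eta = coroot a0 -> inFv alpha eta x -> inA alpha a0 x.
Proof.
move=> Heta0 [H1 H2] [i|]; first by rewrite /ev /= addr0; exact: H1.
rewrite /ev /= corootN -Heta0 dotNr; lra.
Qed.
End Fin.

Unset Implicit Arguments.

Theorem proposition3p6 (R : realType) (n : nat) (Phi : seq 'cV[R]_n)
  (alpha : 'I_n -> 'cV[R]_n) (eta : 'cV[R]_n) (M : nat) :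
  is_irred_root_system Phi -> is_base Phi alpha ->
  is_highest_dual_root Phi alpha eta -> (0 < M)%N ->
  (* (1) *)
  (forall lam, inP alpha lam ->
     exists lam' w, [/\ inLambda alpha eta M lam', inW Phi w &
                        congMQ alpha M lam (w *m lam')]) /\
  (* (2) *)
  (forall lam lam' w, inLambda alpha eta M lam -> inLambda alpha eta M lam' ->
     inW Phi w -> congMQ alpha M lam' (w *m lam) ->
     congMQ alpha M lam' lam /\ congMQ alpha M lam (w *m lam)) /\
  (* (3) *)
  (forall b, inP alpha b -> inMFv alpha eta M b ->
     exists f : 'M[R]_n -> 'M[R]_n * 'cV[R]_n,
       [/\ (forall w, inStabv Phi alpha M b w ->
                      inAffStab Phi alpha (M%:R^-1 *: b) (f w)),
           (forall w1 w2, inStabv Phi alpha M b w1 -> inStabv Phi alpha M b w2 ->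
                      f (w1 *m w2) = aff_mul (f w1) (f w2)),
           (forall w1 w2, inStabv Phi alpha M b w1 -> inStabv Phi alpha M b w2 ->
                      f w1 = f w2 -> w1 = w2) &
           (forall g, inAffStab Phi alpha (M%:R^-1 *: b) g ->
                      exists2 w, inStabv Phi alpha M b w & f w = g)]).
Proof.
move=> HPhi Hbase Heta HM.
case: (Heta) => [[a0 Ha0 Heta0] _].
have [m Hm] := eta_coef HPhi Hbase Heta.
have [p [t [Ht Hp]]] := p_exists HPhi Hbase Heta0 Hm.
have HM0 : M%:R != 0 :> R by rewrite pnatr_eq0 -lt0n.
split; [|split].
- move=> lam Hl.
  have [[w q] [[Hw Hq] HA]] := Exist HPhi Hbase Heta Ha0 Hm Ht Hp HM Hl.
  set y := aff_act (w, q) (M%:R^-1 *: lam) in HA.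
  have Ey : M%:R *: y = w *m lam + M%:R *: q.
    by rewrite /y /aff_act /= scalerDr -scalemxAr scalerA divff ?scale1r.
  have [w' Hw' Ew'] := W_inv Hw.
  exists (M%:R *: y), w'; split => //.
    split.
      rewrite Ey; apply: PD; first exact: (W_P HPhi Hbase Heta Hm Hw Hl).
      apply: (Q_P HPhi Hbase); apply: QZr Hq; exact: natr_int.
    exists (M%:R *: y); last exact: cong_refl.
    by exists y => //; exact: inA_inFv Heta0 HA.
  exists (- (w' *m q)); first by apply: QN; exact: (W_Q HPhi Hbase Hw' Hq).
  rewrite Ey mulmxDr mulmxA Ew' mul1mx -scalemxAr scalerN opprD addrA subrr add0r.
  by [].
- move=> lam lam' w [Hl [c [a Ha Ec] Hlc]] [Hl' [c' [a' Ha' Ec'] Hlc']] Hw Hcong.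
  have HcW : congMQ alpha M (w *m c) (w *m lam).
    case: (cong_sym Hlc) => q Hq E; exists (w *m q); first exact: (W_Q HPhi Hbase Hw Hq).
    by rewrite -mulmxBr E -scalemxAr.
  have H1 : congMQ alpha M (w *m c) c'.
    exact: cong_trans HcW (cong_trans (cong_sym Hcong) Hlc').
  case: (H1) => q0 Hq0 E0.
  have Eaa : aff_act (w, - q0) a = a'.
    apply: (scalerI HM0); rewrite /aff_act /= scalerDr scalemxAr -Ec scalerN -E0.
    by rewrite opprB addrCA subrr addr0 Ec'.
  have HG : inG Phi alpha (w, - q0) by split => //=; exact: QN.
  have := Uniq HPhi Hbase Heta Ha0 Heta0 Hm HG (inFv_inA Heta0 Ha).
  rewrite Eaa => /(_ (inFv_inA Heta0 Ha')) Eaa'.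
  have Ecc : c' = c by rewrite Ec Ec' Eaa'.
  have H2 : congMQ alpha M lam' lam by rewrite Ecc in Hlc'; exact: cong_trans Hlc' (cong_sym Hlc).
  by split => //; exact: cong_trans (cong_sym H2) Hcong.
- move=> b _ _; exists (fun w => (w, M%:R^-1 *: (b - w *m b))); split.
  + move=> w [Hw [q Hq Eq]]; split => //=.
      have -> : M%:R^-1 *: (b - w *m b) = - q.
        by rewrite -opprB Eq scalerN scalerA mulVf ?scale1r.
      exact: QN.
    by rewrite /aff_act /= -scalemxAr -scalerDr addrC subrK.
  + move=> w1 w2 _ _; rewrite /aff_mul /=; congr pair.
    rewrite -scalemxAr mulmxBr -scalerDr mulmxA; congr (_ *: _).
    by rewrite [RHS]addrC addrA subrK.
  + by move=> w1 w2 _ _ [].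
  + move=> [w q] [/= Hw Hq Hact]; exists w.
      split => //; exists (- q); first exact: QN.
      have := congr1 (fun v => M%:R *: v) Hact.
      rewrite /aff_act /= scalerDr -scalemxAr !scalerA divff ?scale1r // => E.
      by rewrite -{2}E opprD addrA subrr add0r scalerN.
    congr pair.
    have := congr1 (fun v => M%:R *: v) Hact.
    rewrite /aff_act /= scalerDr -scalemxAr !scalerA divff ?scale1r // => E.
    by rewrite -{1}E addrC addKr scalerA mulVf ?scale1r.
Qed.
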